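(* Let $K\ge 1$ and, for $k=1,\dots,K$, let $a_k>0$, $b_k>0$, $P_{L,k}>0$, and $\bar{\gamma}>0$. Let $Z_1,\dots,Z_K$ be independent, with $Z_k$ gamma distributed with shape $a_k$ and scale $b_k$ (the moment-matched gamma approximation described in the context), and set $\gamma_k=\frac{\bar{\gamma}}{P_{L,k}}Z_k^2$ and $\gamma^*=\max_{1\le k\le K}\gamma_k$. Then for $\gamma\ge 0$ the CDF of $\gamma^*$ is $$F_{\gamma^*}(\gamma)=\sum_{n_1=0}^{\infty}\cdots\sum_{n_K=0}^{\infty}\prod_{k=1}^{K}\frac{(-1)^{n_k}\left(\sqrt{\frac{P_{L,k}}{\bar{\gamma}b_k^2}}\right)^{a_k+n_k}}{n_k!\,(a_k+n_k)\,\Gamma(a_k)}\;\gamma^{\frac{\sum_{k=1}^{K}(a_k+n_k)}{2}},$$ and for $\gamma>0$ the PDF of $\gamma^*$ is $$f_{\gamma^*}(\gamma)=\sum_{j=1}^{K}\frac{\left(\frac{P_{L,j}}{\bar{\gamma}}\gamma\right)^{\frac{a_j-1}{2}}\exp\left(-\sqrt{\frac{P_{L,j}}{\bar{\gamma}b_j^2}\gamma}\right)}{2b_j^{a_j}\Gamma(a_j)\sqrt{\frac{\bar{\gamma}}{P_{L,j}}\gamma}}\;\sum_{(n_k)_{k\ne j}\in\mathbb{Z}_{\ge0}^{K-1}}\;\prod_{k\ne j}\frac{(-1)^{n_k}\left(\sqrt{\frac{P_{L,k}}{\bar{\gamma}b_k^2}}\right)^{a_k+n_k}}{n_k!\,(a_k+n_k)\,\Gamma(a_k)}\;\gamma^{\frac{\sum_{k\ne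 j}(a_k+n_k)}{2}}.$$
   Context: Model: there are $K$ reflecting surfaces; surface $k$ has $N_k$ elements with mutually independent amplitudes $\alpha_k^{(i)}$ (Nakagami-$m$, shape $m_{k,1}$, spread $\Omega_{k,1}$) and $\beta_k^{(i)}$ (Nakagami-$m$, shape $m_{k,2}$, spread $\Omega_{k,2}$), and $a_k=N_k\mu_k^2/\sigma_k^2$, $b_k=\sigma_k^2/\mu_k$, where $\mu_k$ and $\sigma_k^2$ are the mean and variance of $\alpha_k^{(1)}\beta_k^{(1)}$; the distribution of $\sum_{i=1}^{N_k}\alpha_k^{(i)}\beta_k^{(i)}$ is approximated by the gamma law with shape $a_k$, scale $b_k$ (density $z^{a_k-1}e^{-z/b_k}/(\Gamma(a_k)b_k^{a_k})$). $P_{L,k}$ is the path loss of path $k$, $\bar{\gamma}$ the average SNR, and $\gamma^*$ the SNR of the selected (best) surface. *)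

(* Defs.v *)
From HB Require Import structures.
From mathcomp Require Import all_boot all_order all_algebra.
From mathcomp Require Import all_classical all_reals all_analysis.
Set Implicit Arguments. Unset Strict Implicit. Unset Printing Implicit Defensive.
Import Order.TTheory GRing.Theory Num.Theory.
Import numFieldNormedType.Exports.
Local Open Scope classical_set_scope.
Local Open Scope ring_scope.

Definition Gamma {R : realType} (a : R) : R :=
  Rintegral lebesgue_measure `]0%R, +oo[%classic
    (fun x => powR x (a - 1) * expR (- x)).

Definition gamma_pdf {R : realType} (a b : R) (x : R) : R :=
  powR x (a - 1) * expR (- (x / b)) / (Gamma a * powR b a).

Definition gamma_distributed {d : measure_display} {T : measurableType d}
  {R : realType} (P : probability T R) (Z : {RV P >-> R}) (a b : R) : Prop :=
  forall A : set R, measurable A ->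
    P (Z @^-1` A) =
    (\int[lebesgue_measure]_(x in A `&` `]0%R, +oo[%classic) (gamma_pdf a b x)%:E)%E.

Definition mutually_independent {d : measure_display} {T : measurableType d}
  {R : realType} (P : probability T R) (K : nat) (Z : 'I_K -> {RV P >-> R}) : Prop :=
  forall A : 'I_K -> set R, (forall k, measurable (A k)) ->
    P [set t | forall k, A k (Z k t)] = (\prod_(k < K) P (Z k @^-1` A k))%E.

(* Iterated (multiple) series: the summation indices are the elements of the
   list s (summed in that order, each ranging over nat); the summand F takes
   the assignment of indices as a function I -> nat.  [is_msum s F l] says
   that every inner series converges and the iterated sum equals l. *)
Fixpoint is_msum {R : realType} {I : eqType} (s : seq I)
    (F : (I -> nat) -> R) (l : R) : Prop :=
  match s with
  | [::] => F (fun _ => 0%N) = l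
  | i :: s' => exists g : nat -> R,
      (forall n : nat, is_msum s' (fun ns => F (fun k => if k == i then n else ns k)) (g n))
      /\ series g @ \oo --> l
  end.

Definition coef {R : realType} (a b PL gbar : R) (n : nat) : R :=
  (-1) ^+ n * powR (Num.sqrt (PL / (gbar * b ^+ 2))) (a + n%:R)
  / (n`!%:R * (a + n%:R) * Gamma a).

(* Main.v *)
Require Import Defs.
From HB Require Import structures.
From mathcomp Require Import all_boot all_order all_algebra.
From mathcomp Require Import all_classical all_reals all_analysis.
From mathcomp Require Import ring lra.
From mathcomp Require Import measurable_realfun.
Import Order.TTheory GRing.Theory Num.Theory.
Import numFieldNormedType.Exports.
Local Open Scope classical_set_scope.
Local Open Scope ring_scope.
Definition gc {R : realType} (a : R) (n : nat) : R := (-1) ^+ n / (n`!%:R * (a + n%:R)).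

Lemma pseries_cvg_bound {R : realType} (c : R^nat) (M : R) :
  (forall n, `|c n| <= M / n`!%:R) -> forall x, cvgn (pseries c x).
Proof.
move=> hc x; apply: normed_cvg.
have M0 : 0 <= M by have := hc 0%N; rewrite fact0 divr1; apply: le_trans.
apply: (@series_le_cvg _ _ (M *: exp_coeff `|x|)).
- by move=> n; rewrite /= normr_ge0.
- by move=> n; rewrite /= mulr_ge0 // exp_coeff_ge0.
- move=> n /=; rewrite /exp_coeff /= normrM normrX.
  rewrite (_ : (M *: _) n = M / n`!%:R * `|x| ^+ n); last first.
    rewrite -[LHS]/(M * (`|x| ^+ n / n`!%:R)) /=. by rewrite mulrA mulrAC.
  by rewrite ler_wpM2r // exprn_ge0.
- exact: is_cvg_seriesZ (is_cvg_series_exp_coeff _).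
Qed.
Arguments pseries_cvg_bound {R c M}.
Lemma pseries_diffs_bound {R : realType} (c : R^nat) (M : R) :
  (forall n, `|c n| <= M / n`!%:R) -> forall n, `|pseries_diffs c n| <= M / n`!%:R.
Proof.
move=> hc n; rewrite /pseries_diffs normrM normr_nat.
rewrite (le_trans (ler_wpM2l _ (hc n.+1))) //.
rewrite factS natrM invfM mulrCA (mulrA n.+1%:R) mulfV ?mul1r //.
Qed.

Lemma gc_bound {R : realType} (a : R) : 0 < a -> forall n, `|gc a n| <= a^-1 / n`!%:R.
Proof.
move=> a0 n; rewrite /gc normrM normrX normrN normr1 expr1n mul1r.
rewrite normfV normrM normr_nat ger0_norm; last by rewrite addr_ge0 // ltW.
rewrite invfM mulrC ler_wpM2r // ?invr_ge0 //.
by rewrite lef_pV2 ?posrE ?ltr_wpDr // lerDl.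
Qed.
Arguments pseries_diffs_bound {R c M}.
Arguments gc_bound {R a}.
Definition hser {R : realType} (a y : R) : R := limn (pseries (gc a) y).
Definition hder {R : realType} (a y : R) : R := limn (pseries (pseries_diffs (gc a)) y).

Lemma hser_derive {R : realType} (a : R) : 0 < a -> forall y : R,
  is_derive y 1 (hser a) (hder a y).
Proof.
move=> a0 y.
have hb := gc_bound a0.
apply: (@pseries_snd_diffs _ _ (`|y| + 1)).
- exact: pseries_cvg_bound hb _.
- exact: pseries_cvg_bound (pseries_diffs_bound hb) _.
- exact: pseries_cvg_bound (pseries_diffs_bound (pseries_diffs_bound hb)) _.
- by rewrite [X in _ < X]ger0_norm ?ltrDl // addr_ge0.
Qed.

Lemma gcK {R : realType} (a : R) (m : nat) : 0 < a ->
  (a + m%:R) * gc a m = (-1) ^+ m / m`!%:R.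
Proof.
move=> a0; rewrite /gc; field.
by rewrite pnatr_eq0 -lt0n fact_gt0 /= gt_eqF // ltr_wpDr.
Qed.

Lemma hser_ident {R : realType} (a : R) : 0 < a -> forall y : R,
  a * hser a y + y * hder a y = expR (- y).
Proof.
move=> a0 y.
have hb := gc_bound a0.
have C1 := pseries_cvg_bound hb y.
have C2 := pseries_cvg_bound (pseries_diffs_bound hb) y.
have e : forall N, series (exp_coeff (- y)) N.+1 =
  a * pseries (gc a) y N.+1 + y * pseries (pseries_diffs (gc a)) y N.
  move=> N; rewrite /pseries /series /= mulr_sumr mulr_sumr.
  rewrite big_nat_recl // [X in _ = X + _]big_nat_recl // -addrA -big_split /=.
  congr (_ + _).
    rewrite /exp_coeff /= /gc !expr0 fact0 addr0 mulr1; field.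
    by rewrite gt_eqF.
  apply: eq_bigr => i _; rewrite /exp_coeff /pseries_diffs /=.
  transitivity ((a + i.+1%:R) * gc a i.+1 * y ^+ i.+1).
    by rewrite gcK // [(- y) ^+ _]exprNn mulrAC.
  rewrite exprS; ring.
have H : series (exp_coeff (- y)) @ \oo --> a * hser a y + y * hder a y.
  rewrite -cvg_shiftS /=.
  rewrite (_ : (fun n => _) = (fun N => a * pseries (gc a) y N.+1 +
     y * pseries (pseries_diffs (gc a)) y N)); last by apply/funext => N; exact: e.
  apply: cvgD; apply: cvgMr => //.
  by rewrite cvg_shiftS.
by rewrite /expR (cvg_lim _ H).
Qed.
Arguments hser_derive {R a}.
Arguments hser_ident {R a}.
Arguments gcK {R} a m.
Lemma is_derive_comp1 {R : realType} (f g : R -> R) (x df dg : R) :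
  is_derive x 1 f df -> is_derive (f x) 1 g dg -> is_derive x 1 (g \o f) (dg * df).
Proof.
move=> hf hg.
have df1 : derivable f x 1 by case: hf.
have dg1 : derivable g (f x) 1 by case: hg.
apply: DeriveDef.
  apply: diff_derivable; apply: differentiable_comp.
    exact/derivable1_diffP.
  exact/derivable1_diffP.
rewrite -derive1E derive1_comp // !derive1E.
by rewrite !derive_val.
Qed.

Lemma powRVl {R : realType} (b x : R) : 0 < b -> powR (b^-1) x = (powR b x)^-1.
Proof.
move=> b0; rewrite /powR invr_eq0 gt_eqF // lnV ?posrE // mulrN expRN.
by [].
Qed.

Definition Psi {R : realType} (a y : R) : R := powR y a * hser a y.

Lemma Psi_derive {R : realType} (a : R) : 0 < a -> forall y : R, 0 < y ->
  is_derive y 1 (Psi a) (powR y (a - 1) * expR (- y)).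
Proof.
move=> a0 y y0.
have h1 := is_derive1_powR a y0.
have h2 := hser_derive a0 y.
have := is_deriveM h1 h2.
rewrite /Psi => H; apply: (is_derive_eq H).
rewrite -(hser_ident a0 y) -(mulr_powRB1 (ltW y0) a0).
rewrite /GRing.scale /=; ring.
Qed.
Arguments Psi_derive {R a}.
Lemma is_derive_mulc {R : realType} (f : R -> R) (x c df : R) :
  is_derive x 1 f df -> is_derive x 1 (fun z => f z * c) (df * c).
Proof.
move=> hf.
have -> : (fun z => f z * c) = f * cst c by apply/funext.
have := is_deriveM hf (is_derive_cst c x 1).
move=> H; apply: (is_derive_eq H); rewrite /GRing.scale /=; ring.
Qed.

Arguments is_derive_mulc {R f x} c {df}.
Arguments is_derive_comp1 {R f g x df dg}.

Definition Phi {R : realType} (a b z : R) : R := Psi a (z / b) / Gamma a.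

Lemma Phi_derive {R : realType} (a b : R) : 0 < a -> 0 < b -> forall z : R, 0 < z ->
  is_derive z 1 (Phi a b) (gamma_pdf a b z).
Proof.
move=> a0 b0 z z0.
have h1 : is_derive z 1 (fun z => z * b^-1) (1 * b^-1).
  exact: (is_derive_mulc b^-1 (is_derive_id z 1)).
have h2 := is_derive_mulc (Gamma a)^-1 (Psi_derive a0 _ (divr_gt0 z0 b0)).
have := is_derive_comp1 h1 h2.
rewrite /Phi => H; apply: (is_derive_eq H).
rewrite /gamma_pdf mul1r powRM ?invr_ge0 ?ltW // powRVl //.
rewrite -(mulr_powRB1 (ltW b0) a0).
rewrite !invfM; ring.
Qed.
Arguments Phi_derive {R a b}.
Lemma Gamma_ge0 {R : realType} (a : R) : 0 <= Gamma a.
Proof.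
rewrite /Gamma /Rintegral fine_ge0 // integral_ge0 // => x _.
by rewrite lee_fin mulr_ge0 // ?powR_ge0 ?expR_ge0.
Qed.

Lemma gamma_pdf_ge0 {R : realType} (a b x : R) : 0 <= gamma_pdf a b x.
Proof.
rewrite /gamma_pdf divr_ge0 ?mulr_ge0 ?powR_ge0 ?expR_ge0 ?Gamma_ge0 //.
Qed.

Lemma gamma_pdf_eq {R : realType} (a b : R) : gamma_pdf a b =
  (fun z => ((fun z : R => powR z (a - 1)) \* (expR \o (fun z : R => z * (- b^-1)))) z
            * (Gamma a * powR b a)^-1).
Proof. by apply/funext => z; rewrite /gamma_pdf /= mulrN. Qed.

Lemma gamma_pdf_derivable {R : realType} (a b x : R) : 0 < x ->
  derivable (gamma_pdf a b) x 1.
Proof.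
move=> x0; rewrite gamma_pdf_eq.
have h1 := is_derive1_powR (a - 1) x0.
have h2 := is_derive_comp1 (is_derive_mulc (- b^-1) (is_derive_id x 1))
  (is_derive_expR _).
by case: (is_derive_mulc (Gamma a * powR b a)^-1 (is_deriveM h1 h2)).
Qed.

Lemma gamma_pdf_measurable {R : realType} (a b : R) :
  measurable_fun [set: R] (gamma_pdf a b).
Proof.
rewrite gamma_pdf_eq; apply: measurable_funM => //.
apply: measurable_funM; first exact: measurable_powR.
apply: measurableT_comp => //; exact: measurable_funM.
Qed.
Lemma Phi_cvg0 {R : realType} (a b : R) : 0 < a -> 0 < b ->
  forall u : R^nat, (forall n, 0 < u n) -> u n @[n --> \oo] --> 0 ->
  Phi a b (u n) @[n --> \oo] --> 0.
Proof.
move=> a0 b0 u u0 ucvg.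
pose v n := u n / b.
have v0 n : 0 < v n by rewrite /v divr_gt0.
have vcvg : v n @[n --> \oo] --> 0.
  have : u n * b^-1 @[n --> \oo] --> 0 * b^-1 by apply: cvgMl.
  by rewrite mul0r.
have p0 : powR (v n) a @[n --> \oo] --> 0.
  exact: (cvg_at_rightP _ _ _).1 (powR_cvg0 a0) v (conj v0 vcvg).
have hc : {for 0, continuous (hser a)}.
  apply: differentiable_continuous; apply/derivable1_diffP.
  by case: (hser_derive a0 0).
have h0 : hser a (v n) @[n --> \oo] --> hser a 0 := cvg_comp _ _ vcvg hc.
have : powR (v n) a * hser a (v n) * (Gamma a)^-1 @[n --> \oo] -->
  0 * hser a 0 * (Gamma a)^-1 by apply: cvgMl; exact: cvgM p0 h0.
by rewrite !mul0r.
Qed.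
Lemma Phi_cont {R : realType} (a b z : R) : 0 < a -> 0 < b -> 0 < z ->
  {for z, continuous (Phi a b)}.
Proof.
move=> a0 b0 z0; apply: differentiable_continuous; apply/derivable1_diffP.
by case: (Phi_derive a0 b0 z z0).
Qed.

Lemma cdf_Phi {R : realType} (a b s : R) : 0 < a -> 0 < b -> 0 < s ->
  (\int[lebesgue_measure]_(x in `]0%R, s]%classic) (gamma_pdf a b x)%:E = (Phi a b s)%:E)%E.
Proof.
move=> a0 b0 s0.
pose eps (i : nat) := s / i.+2%:R.
have eps0 i : 0 < eps i by rewrite /eps divr_gt0.
have epss i : eps i < s.
  by rewrite /eps ltr_pdivrMr // ltr_pMr // ltr1n.
pose Fi i := `[eps i, s]%classic.
have nd : nondecreasing_seq Fi.
  move=> m n mn; rewrite subsetEset => x; rewrite /Fi /= !in_itv /= => /andP[h1 ->].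
  rewrite andbT (le_trans _ h1) // /eps ler_pM2l // lef_pV2 ?posrE ?ltr0n //.
  by rewrite ler_nat !ltnS.
have mF i : measurable (Fi i) by exact: measurable_itv.
have mf i : measurable_fun (Fi i) (fun x => (gamma_pdf a b x)%:E).
  apply/measurable_EFinP; apply: measurable_funTS; exact: gamma_pdf_measurable.
have f0 i x : Fi i x -> (0 <= (gamma_pdf a b x)%:E)%E.
  by move=> _; rewrite lee_fin gamma_pdf_ge0.
have H := @ge0_nondecreasing_set_cvg_integral _ (measurableTypeR R) R Fi
  (fun x => (gamma_pdf a b x)%:E) lebesgue_measure nd mF mf f0.
have U : \bigcup_i Fi i = `]0%R, s]%classic.
  apply/seteqP; split => x /=.
    move=> [i _]; rewrite /Fi /= !in_itv /= => /andP[h1 ->].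
    by rewrite andbT (lt_le_trans (eps0 i)).
  rewrite in_itv /= => /andP[x0 xs].
  exists (Num.bound (s / x)) => //; rewrite /Fi /= in_itv /= xs andbT.
  rewrite /eps ler_pdivrMr ?ltr0n // mulrC -ler_pdivrMr //.
  apply: (le_trans (ltW (archi_boundP _))); first by rewrite ltW // divr_gt0.
  by rewrite ler_nat -addn2 leq_addr.
rewrite U in H.
have E i : (\int[lebesgue_measure]_(x in Fi i) (gamma_pdf a b x)%:E =
    (Phi a b s - Phi a b (eps i))%:E)%E.
  rewrite EFinB; apply: continuous_FTC2 => //.
  - apply: derivable_within_continuous => x; rewrite in_itv /= => /andP[h _].
    exact: gamma_pdf_derivable (lt_le_trans (eps0 i) h).
  - split.
    + move=> x; rewrite in_itv /= => /andP[h _].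
      by case: (Phi_derive a0 b0 x (lt_trans (eps0 i) h)).
    + exact/cvg_at_right_filter/Phi_cont.
    + exact/cvg_at_left_filter/Phi_cont.
  - move=> x; rewrite in_itv /= => /andP[h _].
    rewrite derive1E; apply: derive_val.
    exact: (Phi_derive a0 b0 x (lt_trans (eps0 i) h)).
have H2 : (fun i => (Phi a b s - Phi a b (eps i))%:E) @ \oo --> (Phi a b s)%:E.
  apply: cvg_EFin; first exact: nearW.
  rewrite (_ : fine \o _ = (fun i => Phi a b s - Phi a b (eps i))); last first.
    by apply/funext.
  rewrite -[X in _ --> X]subr0; apply: cvgB; first exact: cvg_cst.
  apply: Phi_cvg0 => //.
  rewrite (_ : eps = (fun n => s * harmonic n.+1)); last first.
    by apply/funext => n.
  rewrite -(mulr0 s); apply: cvgMr.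
  by rewrite cvg_shiftS; exact: cvg_harmonic.
rewrite (_ : (fun i => _) = (fun i => (Phi a b s - Phi a b (eps i))%:E)) in H.
  exact: cvg_unique H H2.
by apply/funext => i; rewrite E.
Qed.
Lemma msum_prod {R : realType} {I : eqType} (s : seq I) (u : I -> nat -> R) (S : I -> R) :
  uniq s -> (forall k, k \in s -> series (u k) @ \oo --> S k) ->
  forall (G : (I -> nat) -> R) (c : R),
  (forall ns, G ns = c * \prod_(k <- s) u k (ns k)) ->
  is_msum s G (c * \prod_(k <- s) S k).
Proof.
elim: s => [|i s IH] /= => [_ _ G c hG|/andP[ni us] hS G c hG].
  by rewrite hG !big_nil.
exists (fun n => c * u i n * \prod_(k <- s) S k); split.
  move=> n; apply: IH => //.
    by move=> k ks; apply: hS; rewrite inE ks orbT.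
  move=> ns; rewrite hG big_cons eqxx -mulrA; congr (_ * (_ * _)).
  rewrite big_seq_cond [RHS]big_seq_cond; apply: eq_bigr => k /andP[ks _].
  by case: eqP => // ki; move: ni; rewrite -ki ks.
have := hS i (mem_head _ _).
move=> /(@cvgMr _ _ _ _ _ (c * \prod_(k <- s) S k)).
rewrite big_cons (_ : (fun n => _) = series (fun n => c * u i n * \prod_(k <- s) S k)).
  suff -> : c * (S i * \prod_(j <- s) S j) = c * \prod_(k <- s) S k * S i by [].
  ring.
apply: funext => n; rewrite /series /= mulr_sumr; apply: eq_bigr => m _.
by rewrite mulrAC.
Qed.
Lemma is_derive_bigprod {R : realType} {I : eqType} (s : seq I) (h : I -> R -> R)
  (dh : I -> R) (x : R) :
  uniq s -> (forall i, i \in s -> is_derive x 1 (h i) (dh i)) ->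
  is_derive x 1 (fun y => \prod_(i <- s) h i y)
    (\sum_(j <- s) dh j * \prod_(k <- s | k != j) h k x).
Proof.
elim: s => [|i s IH] /= => [_ _|/andP[ni us] hd].
  have -> : (fun y => \prod_(i <- [::]) h i y) = cst 1.
    by apply: funext => y; rewrite big_nil.
  rewrite big_nil; exact: is_derive_cst.
have -> : (fun y => \prod_(k <- i :: s) h k y) =
    h i * (fun y => \prod_(k <- s) h k y).
  by apply: funext => y; rewrite big_cons.
have IH' : is_derive x 1 (fun y => \prod_(k <- s) h k y) (\sum_(j <- s) dh j * \prod_(k <- s | k != j) h k x).
  by apply: IH us _ => k ks; apply: hd; rewrite inE ks orbT.
have := is_deriveM (hd i (mem_head _ _)) IH'.
move=> H; apply: (is_derive_eq H).
rewrite big_cons big_cons eqxx /= /GRing.scale /=.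
have -> : \prod_(k <- s | k != i) h k x = \prod_(k <- s) h k x.
  rewrite big_seq_cond [RHS]big_seq; apply: eq_bigl => k.
  by case: (boolP (k \in s)) => //= ks; apply/negP => /eqP ki; move: ni; rewrite -ki ks.
rewrite mulr_sumr addrC; congr (_ + _); first by rewrite mulrC.
rewrite [LHS]big_seq [RHS]big_seq; apply: eq_bigr => j js.
rewrite big_cons; case: eqP => [ij|_]; first by move: ni; rewrite ij js.
by rewrite mulrCA.
Qed.
Lemma Phi0 {R : realType} (a b : R) : 0 < a -> Phi a b 0 = 0.
Proof. by move=> a0; rewrite /Phi /Psi mul0r powR0 ?gt_eqF // !mul0r. Qed.

Lemma sqrt_divsq {R : realType} (x b : R) : 0 <= x -> 0 < b ->
  Num.sqrt (x / b ^+ 2) = Num.sqrt x / b.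
Proof.
move=> x0 b0; rewrite -exprVn sqrtrM // sqrtr_sqr ger0_norm // invr_ge0 ltW //.
Qed.

Lemma cdfX {d : measure_display} {T : measurableType d} {R : realType}
  (P : probability T R) (X : {RV P >-> R}) (a b s : R) :
  gamma_distributed X a b -> 0 < a -> 0 < b -> 0 <= s ->
  P (X @^-1` `[- s, s]%classic) = (Phi a b s)%:E.
Proof.
move=> hX a0 b0 s0; rewrite hX; last exact: measurable_itv.
have [->|sgt0] := eqVneq s 0.
  rewrite Phi0 // (_ : _ `&` _ = set0) ?integral_set0 //.
  apply/seteqP; split => x //=; rewrite !in_itv /= oppr0 => -[/andP[_ x0] /andP[x0' _]].
  by move: (le_lt_trans x0 x0'); rewrite ltxx.
have s0' : 0 < s by rewrite lt_neqAle eq_sym sgt0 s0.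
rewrite -cdf_Phi //; congr (integral _ _ _).
apply/seteqP; split => x /=; rewrite !in_itv /=.
  by move=> [/andP[_ ->] /andP[-> _]].
move=> /andP[x0 xs]; rewrite xs andbT x0; split => //.
by rewrite (le_trans _ (ltW x0)) // oppr_le0.
Qed.

Lemma series_coef {R : realType} (a b PL gbar g : R) : 0 < a -> 0 < b ->
  0 < PL -> 0 < gbar -> 0 <= g ->
  series (fun n => coef a b PL gbar n * powR g ((a + n%:R) / 2)) @ \oo -->
  Phi a b (Num.sqrt (PL / gbar * g)).
Proof.
move=> a0 b0 PL0 gbar0 g0.
pose y := Num.sqrt (PL / gbar * g) / b.
have y0 : 0 <= y by rewrite /y divr_ge0 ?sqrtr_ge0 ?ltW.
have ey : Num.sqrt (PL / (gbar * b ^+ 2)) * Num.sqrt g = y.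
  rewrite -sqrtrM; last by rewrite divr_ge0 ?mulr_ge0 ?sqr_ge0 // ltW.
  have h : 0 <= PL / gbar * g by rewrite mulr_ge0 // divr_ge0 // ltW.
  rewrite /y -(sqrt_divsq _ _ h b0).
  by congr Num.sqrt; rewrite invfM; ring.
have et : forall n, coef a b PL gbar n * powR g ((a + n%:R) / 2) =
    powR y a / Gamma a * (gc a n * y ^+ n).
  move=> n; rewrite /coef /gc.
  have -> : powR g ((a + n%:R) / 2) = powR (Num.sqrt g) (a + n%:R).
    by rewrite -powR12_sqrt // -powRrM mulrC.
  rewrite mulrAC -[_ * _ * Num.sqrt g `^ _]mulrA -powRM ?sqrtr_ge0 // ey.
  rewrite powRD; last by rewrite gt_eqF ?implyFb // ltr_wpDr.
  rewrite powR_mulrn // !invfM; ring.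
rewrite (_ : series _ = fun N => powR y a / Gamma a * pseries (gc a) y N); last first.
  apply: funext => N; rewrite /series /pseries /= mulr_sumr.
  by apply: eq_bigr => n _; rewrite et.
rewrite /Phi /Psi -/y mulrAC.
apply: cvgMr; exact: (pseries_cvg_bound (gc_bound a0) y).
Qed.
Arguments cdfX {d T R P X a b s}.
Lemma h_derive {R : realType} (a b c g : R) : 0 < a -> 0 < b -> 0 < c -> 0 < g ->
  is_derive g 1 (fun x => Phi a b (Num.sqrt (c * x)))
    (gamma_pdf a b (Num.sqrt (c * g)) * ((2 * Num.sqrt (c * g))^-1 * c)).
Proof.
move=> a0 b0 c0 g0.
have cg0 : 0 < c * g by rewrite mulr_gt0.
have h1 : is_derive g 1 (fun x => c * x) c.
  have := is_derive_mulc c (is_derive_id g 1).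
  rewrite mul1r (_ : (fun z => z * c) = (fun z => c * z)) //.
  by apply: funext => z; rewrite mulrC.
have h2 := is_derive_comp1 h1 (is_derive1_sqrt cg0).
have sg0 : 0 < Num.sqrt (c * g) by rewrite sqrtr_gt0.
have h3 := is_derive_comp1 h2 (Phi_derive a0 b0 _ sg0).
exact: h3.
Qed.

Lemma powR_sum {R : realType} {I : Type} (s : seq I) (P : pred I) (f : I -> R) (g : R) :
  0 < g -> powR g ((\sum_(k <- s | P k) f k) / 2) = \prod_(k <- s | P k) powR g (f k / 2).
Proof.
move=> g0; rewrite /powR gt_eqF //= -mulrA big_distrl /= expR_sum.
by apply: eq_bigr => k _; rewrite mulrA.
Qed.

Lemma coef_eq {R : realType} (a b PL gbar g : R) : 0 < a -> 0 < b -> 0 < PL -> 0 < gbar -> 0 < g ->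
  gamma_pdf a b (Num.sqrt (PL / gbar * g)) *
    ((2 * Num.sqrt (PL / gbar * g))^-1 * (PL / gbar)) =
  powR (PL / gbar * g) ((a - 1) / 2) * expR (- Num.sqrt (PL / (gbar * b ^+ 2) * g))
  / (2 * powR b a * Gamma a * Num.sqrt (gbar / PL * g)).
Proof.
move=> a0 b0 PL0 gbar0 g0.
have c0 : 0 < PL / gbar by rewrite divr_gt0.
have cg0 : 0 <= PL / gbar * g by rewrite ltW // mulr_gt0.
have e1 : powR (Num.sqrt (PL / gbar * g)) (a - 1) = powR (PL / gbar * g) ((a - 1) / 2).
  by rewrite -powR12_sqrt // -powRrM [2^-1 * _]mulrC.
have e2 : Num.sqrt (PL / (gbar * b ^+ 2) * g) = Num.sqrt (PL / gbar * g) / b.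
  rewrite -sqrt_divsq //; congr Num.sqrt; rewrite invfM; ring.
have e3 : Num.sqrt (gbar / PL * g) = Num.sqrt (PL / gbar * g) / (PL / gbar).
  rewrite -sqrt_divsq //; congr Num.sqrt; field.
  by rewrite !gt_eqF.
rewrite /gamma_pdf e1 e2 e3 !invfM !invrK; ring.
Qed.
Arguments h_derive {R a b c g}.
Lemma gam_le {R : realType} (gbar PL x w : R) : 0 < gbar -> 0 < PL -> 0 <= x ->
  (gbar / PL * w ^+ 2 <= x) = (- Num.sqrt (PL / gbar * x) <= w <= Num.sqrt (PL / gbar * x)).
Proof.
move=> g0 P0 x0.
rewrite -ler_norml -sqrtr_sqr ler_sqrt; last by rewrite mulr_ge0 // divr_ge0 // ltW.
have c0 : 0 < PL / gbar by rewrite divr_gt0.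
rewrite -(ler_pM2l c0) mulrA (_ : PL / gbar * (gbar / PL) = 1) ?mul1r //.
by field; rewrite !gt_eqF.
Qed.

Lemma sum_pos_ord {R : realType} (K : nat) (hK : (0 < K)%N) (f : 'I_K -> R) :
  (forall k, 0 < f k) -> 0 < \sum_(k < K) f k.
Proof.
move=> hf; rewrite (bigD1 (Ordinal hK)) //=.
by rewrite ltr_pwDl // sumr_ge0 // => i _; rewrite ltW.
Qed.


Lemma prod_enum_ord {R : realType} (K : nat) (f : 'I_K -> R) :
  \prod_(k <- enum 'I_K) f k = \prod_(k < K) f k.
Proof. by rewrite big_enum. Qed.

Lemma sum_enum_ord {R : realType} (K : nat) (f : 'I_K -> R) :
  \sum_(k <- enum 'I_K) f k = \sum_(k < K) f k.
Proof. by rewrite big_enum. Qed.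

Lemma prod_filter_ord {R : realType} (K : nat) (f : 'I_K -> R) j :
  \prod_(k <- [seq k <- enum 'I_K | k != j]) f k = \prod_(k < K | k != j) f k.
Proof. by rewrite big_filter big_enum_cond. Qed.
Theorem theorem2 (d : measure_display) (T : measurableType d) (R : realType)
  (P : probability T R) (K : nat) (hK : (0 < K)%N)
  (a b PL : 'I_K -> R) (gbar : R)
  (ha : forall k, 0 < a k) (hb : forall k, 0 < b k) (hPL : forall k, 0 < PL k)
  (hgbar : 0 < gbar)
  (Z : 'I_K -> {RV P >-> R})
  (hZ : forall k, gamma_distributed (Z k) (a k) (b k))
  (hind : mutually_independent Z) :
  let gam := fun (k : 'I_K) (t : T) => gbar / PL k * (Z k t) ^+ 2 in
  let gstar := fun t : T => \big[Num.max/0]_(k < K) gam k t in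
  let F := fun g : R => fine (P [set t | gstar t <= g]) in
  (forall g : R, 0 <= g ->
     is_msum (enum 'I_K)
       (fun ns => (\prod_(k < K) coef (a k) (b k) (PL k) gbar (ns k))
                  * powR g ((\sum_(k < K) (a k + (ns k)%:R)) / 2))
       (F g))
  /\
  (forall g : R, 0 < g ->
     exists S : 'I_K -> R,
       (forall j : 'I_K,
          is_msum [seq k <- enum 'I_K | k != j]
            (fun ns => (\prod_(k < K | k != j) coef (a k) (b k) (PL k) gbar (ns k))
                       * powR g ((\sum_(k < K | k != j) (a k + (ns k)%:R)) / 2))
            (S j))
       /\ is_derive g 1 F
            (\sum_(j < K)
               powR (PL j / gbar * g) ((a j - 1) / 2)
               * expR (- Num.sqrt (PL j / (gbar * b j ^+ 2) * g))
               / (2 * powR (b j) (a j) * Gamma (a j) * Num.sqrt (gbar / PL j * g))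
               * S j)).
Proof.
move=> gam gstar F.
pose z := fun (k : 'I_K) (x : R) => Num.sqrt (PL k / gbar * x).
have k0 : 'I_K := Ordinal hK.
have Fprod : forall x, F x = \prod_(k < K) Phi (a k) (b k) (z k x).
  move=> x; rewrite /F.
  have [x0|xlt0] := leP 0 x.
    rewrite (_ : [set t | gstar t <= x] =
       [set t | forall k, `[- z k x, z k x]%classic (Z k t)]).
      rewrite (hind (fun k => `[- z k x, z k x]%classic)); last by move=> k; exact: measurable_itv.
      under eq_bigr => k _ do rewrite (cdfX (hZ k) (ha k) (hb k) (sqrtr_ge0 _)).
      by rewrite prodEFin.
    apply/seteqP; split => t /=.
      move=> /bigmax_leP [_ H] k; rewrite in_itv /= -gam_le //.
      exact: H.
    move=> H; apply/bigmax_leP; split => // k _.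
    by rewrite /gam gam_le //; move: (H k); rewrite in_itv.
  rewrite (_ : [set t | gstar t <= x] = set0) ?measure0 /=.
    rewrite (bigD1 k0) //= /z ler0_sqrtr ?Phi0 ?mul0r //.
    by rewrite pmulr_rle0 ?ltW // divr_gt0.
  apply/seteqP; split => t //= /bigmax_leP [h _].
  by move: (le_lt_trans h xlt0); rewrite ltxx.
pose u := fun (k : 'I_K) (g : R) (n : nat) =>
  coef (a k) (b k) (PL k) gbar n * powR g ((a k + n%:R) / 2).
have useries : forall g k, 0 <= g -> series (u k g) @ \oo --> Phi (a k) (b k) (z k g).
  by move=> g k g0; exact: series_coef.
split.
  move=> g g0; rewrite Fprod -prod_enum_ord -[X in is_msum _ _ X]mul1r.
  apply: (@msum_prod R _ (enum 'I_K) (u^~ g) (fun k => Phi (a k) (b k) (z k g))); first exact: enum_uniq.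
    by move=> k _; exact: useries.
  move=> ns; rewrite mul1r prod_enum_ord /u [RHS]big_split /=; congr (_ * _).
  have [->|gpos] := eqVneq g 0.
    rewrite powR0; last first.
      rewrite mulf_neq0 // ?invr_neq0 // gt_eqF //.
      by apply: sum_pos_ord => // k; rewrite ltr_wpDr.
    rewrite (bigD1 k0) //= powR0 ?mul0r //.
    by rewrite mulf_neq0 // ?invr_neq0 // gt_eqF // ltr_wpDr.
  have g0' : 0 < g by rewrite lt_neqAle eq_sym gpos g0.
  by rewrite powR_sum.
move=> g g0.
exists (fun j => 1 * \prod_(k <- [seq k <- enum 'I_K | k != j]) Phi (a k) (b k) (z k g)).
split.
  move=> j; apply: (@msum_prod R _ _ (u^~ g) (fun k => Phi (a k) (b k) (z k g))).
  - by rewrite filter_uniq // enum_uniq.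
  - by move=> k _; apply: useries; rewrite ltW.
  - move=> ns; rewrite mul1r prod_filter_ord /u [RHS]big_split /=; congr (_ * _).
    by rewrite powR_sum.
have -> : F = fun x => \prod_(k <- enum 'I_K) Phi (a k) (b k) (z k x).
  by apply: funext => x; rewrite Fprod prod_enum_ord.
have H := @is_derive_bigprod R _ (enum 'I_K) (fun k x => Phi (a k) (b k) (z k x))
  (fun k => gamma_pdf (a k) (b k) (z k g) * ((2 * z k g)^-1 * (PL k / gbar))) g
  (enum_uniq _) (fun k _ => h_derive (ha k) (hb k) (divr_gt0 (hPL k) hgbar) g0).
apply: (is_derive_eq H).
rewrite sum_enum_ord; apply: eq_bigr => j _.
rewrite mul1r big_filter; congr (_ * _).
by rewrite /z coef_eq.
Qed.
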